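(* Let $\mathsf{V}$ be a congruence distributive variety of $\mathcal{L}$-algebras that has the congruence extension property and parametrically definable principal congruences. If $\mathrm{Th}(\mathsf{V})$ has a model completion, then $\mathsf{V}$ has equationally definable principal congruences.
   Context: $\mathcal{L}$ is an algebraic first-order language with at least one constant symbol. A model completion of a theory $T$ is a model complete theory $T^*$ with the same universal consequences as $T$ such that for every model $M$ of $T$, $T^*$ plus the diagram of $M$ is complete. $\mathrm{Cg}^{\mathbf{A}}(b_1,b_2)$ is the congruence of $\mathbf{A}$ generated by $(b_1,b_2)$. Congruence extension property: for every $\mathbf{A}\in\mathsf{V}$, every congruence of a subalgebra of $\mathbf{A}$ is the restriction of a congruence of $\mathbf{A}$. Parametrically definable principal congruences: there is a quantifier-free formula $\xi(x_1,x_2,y_1,y_2,\overline{z})$ such that for every $\mathbf{A}\in\mathsf{V}$ and $a_1,a_2,b_1,b_2\in A$, $(a_1,a_2)\in\mathrm{Cg}^{\mathbf{A}}(b_1,b_2)$ iff every $\mathbf{B}\in\mathsf{V}$ extending $\mathbf{A}$ satisfies $\forall\overline{z}.\xi(a_1,a_2,b_1,b_2,\overline{z})$. Equationally definable principal congruences: there is a conjunction of equations $\alpha(x_1,x_2,y_1,y_2)$ with $(a_1,a_2)\in\mathrm{Cg}^{\mathbf{A}}(b_1,b_2)$ iff $\mathbf{A}\models\alpha(a_1,a_2,b_1,b_2)$ for all $\mathbf{A}\in\mathsf{V}$ and $a_1,a_2,b_1,b_2\in A$. *)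

(* Defs.v *)
From mathcomp Require Import all_boot.
From Stdlib Require List.
Import List.ListNotations.

Set Implicit Arguments.
Unset Strict Implicit.
Unset Printing Implicit Defensive.

Record signature := Signature { sym : Type; ar : sym -> nat }.

Section UA.
Variable L : signature.

Record algebra := Algebra {
  carrier :> Type;
  op : forall f : sym L, ('I_(ar f) -> carrier) -> carrier }.
Arguments op {a} f _.

Inductive term : Type :=
  | Var : nat -> term
  | App : forall f : sym L, ('I_(ar f) -> term) -> term.

Fixpoint eval (A : algebra) (v : nat -> A) (t : term) : A :=
  match t with
  | Var n => v n
  | App f args => op f (fun i => eval v (args i))
  end.

Fixpoint term_vars_in (P : nat -> Prop) (t : term) : Prop :=
  match t with
  | Var n => P n
  | App f args => forall i, term_vars_in P (args i)
  end.

Inductive formula : Type :=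
  | FEq : term -> term -> formula
  | FFalse : formula
  | FNot : formula -> formula
  | FAnd : formula -> formula -> formula
  | FOr : formula -> formula -> formula
  | FImp : formula -> formula -> formula
  | FAll : nat -> formula -> formula
  | FEx : nat -> formula -> formula.

Definition upd (A : Type) (v : nat -> A) (x : nat) (a : A) : nat -> A :=
  fun n => if n == x then a else v n.

Fixpoint sat (A : algebra) (v : nat -> A) (phi : formula) : Prop :=
  match phi with
  | FEq t1 t2 => eval v t1 = eval v t2
  | FFalse => False
  | FNot p => ~ sat v p
  | FAnd p q => sat v p /\ sat v q
  | FOr p q => sat v p \/ sat v q
  | FImp p q => sat v p -> sat v q
  | FAll x p => forall a : A, sat (upd v x a) p
  | FEx x p => exists a : A, sat (upd v x a) p
  end.

Fixpoint qfree (phi : formula) : Prop :=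
  match phi with
  | FEq _ _ | FFalse => True
  | FNot p => qfree p
  | FAnd p q | FOr p q | FImp p q => qfree p /\ qfree q
  | FAll _ _ | FEx _ _ => False
  end.

Fixpoint fv_in (P : nat -> Prop) (phi : formula) : Prop :=
  match phi with
  | FEq t1 t2 => term_vars_in P t1 /\ term_vars_in P t2
  | FFalse => True
  | FNot p => fv_in P p
  | FAnd p q | FOr p q | FImp p q => fv_in P p /\ fv_in P q
  | FAll x p | FEx x p => fv_in (fun n => n = x \/ P n) p
  end.

Definition sentence (phi : formula) : Prop := fv_in (fun _ => False) phi.

Inductive universal : formula -> Prop :=
  | univ_qf : forall p, qfree p -> universal p
  | univ_all : forall x p, universal p -> universal (FAll x p).

Definition theory := formula -> Prop.

Definition models (A : algebra) (T : theory) : Prop :=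
  forall phi, T phi -> forall v : nat -> A, sat v phi.

Definition entails (T : theory) (phi : formula) : Prop :=
  forall A : algebra, models A T -> forall v : nat -> A, sat v phi.

Definition Th (K : algebra -> Prop) : theory :=
  fun phi => sentence phi /\ forall A, K A -> forall v : nat -> A, sat v phi.

(* Embeddings (= injective homomorphisms, the language being algebraic). *)
Definition hom (A B : algebra) (h : A -> B) : Prop :=
  forall (f : sym L) (args : 'I_(ar f) -> A), h (op f args) = op f (fun i => h (args i)).

Definition embedding (A B : algebra) (h : A -> B) : Prop :=
  hom h /\ forall x y, h x = h y -> x = y.

Definition elementary (A B : algebra) (h : A -> B) : Prop :=
  forall (phi : formula) (v : nat -> A), sat v phi <-> sat (fun n => h (v n)) phi.

Definition model_complete (T : theory) : Prop :=
  forall (M N : algebra) (h : M -> N),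
    models M T -> models N T -> embedding h -> elementary h.

(* T' is a model completion of T:
   - T' is a theory (set of sentences) which is model complete,
   - T and T' have the same universal consequences,
   - for every model M of T, T' + diagram(M) is complete, i.e. for every
     L(M)-sentence (a formula phi with its free variables instantiated by
     parameters v from M), either every model of T' + diag(M) satisfies it or
     every such model satisfies its negation.  A model of T' + diag(M) is a
     model N of T' together with an embedding e : M -> N. *)
Definition model_completion (T T' : theory) : Prop :=
  [/\ (forall phi, T' phi -> sentence phi),
      model_complete T',
      (forall phi, sentence phi -> universal phi -> (entails T phi <-> entails T' phi))
    & (forall M : algebra, models M T ->
         forall (phi : formula) (v : nat -> M),
           (forall (N : algebra) (e : M -> N), models N T' -> embedding e ->
               sat (fun n => e (v n)) phi)
           \/
           (forall (N : algebra) (e : M -> N), models N T' -> embedding e ->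
               ~ sat (fun n => e (v n)) phi))].

Definition is_variety (V : algebra -> Prop) : Prop :=
  exists E : term * term -> Prop,
    forall A : algebra,
      V A <-> (forall e, E e -> forall v : nat -> A, eval v e.1 = eval v e.2).

Definition is_congruence (A : algebra) (th : A -> A -> Prop) : Prop :=
  [/\ (forall x, th x x),
      (forall x y, th x y -> th y x),
      (forall x y z, th x y -> th y z -> th x z)
    & (forall (f : sym L) (a b : 'I_(ar f) -> A),
         (forall i, th (a i) (b i)) -> th (op f a) (op f b))].

Definition Cg (A : algebra) (b1 b2 : A) : A -> A -> Prop :=
  fun x y => forall th, is_congruence th -> th b1 b2 -> th x y.

Definition cmeet (A : algebra) (th ps : A -> A -> Prop) : A -> A -> Prop :=
  fun x y => th x y /\ ps x y.

Definition cjoin (A : algebra) (th ps : A -> A -> Prop) : A -> A -> Prop :=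
  fun x y => forall ch : A -> A -> Prop, is_congruence ch ->
    (forall u w, th u w -> ch u w) -> (forall u w, ps u w -> ch u w) -> ch x y.

Definition con_distributive_alg (A : algebra) : Prop :=
  forall th ph ps : A -> A -> Prop,
    is_congruence th -> is_congruence ph -> is_congruence ps ->
    forall x y, cmeet th (cjoin ph ps) x y <-> cjoin (cmeet th ph) (cmeet th ps) x y.

Definition congruence_distributive (V : algebra -> Prop) : Prop :=
  forall A, V A -> con_distributive_alg A.

(* Congruence extension property; a subalgebra B of A is given up to
   isomorphism by an embedding h : B -> A. *)
Definition CEP (V : algebra -> Prop) : Prop :=
  forall (A B : algebra) (h : B -> A), V A -> embedding h ->
    forall th : B -> B -> Prop, is_congruence th ->
      exists Ph : A -> A -> Prop, is_congruence Ph /\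
        forall x y, th x y <-> Ph (h x) (h y).

(* Parametrically definable principal congruences.  Variables: x1,x2,y1,y2 are
   x_0,x_1,x_2,x_3; all other variables of xi play the role of z-bar and are
   universally quantified. *)
Definition PDPC (V : algebra -> Prop) : Prop :=
  exists xi : formula, qfree xi /\
    forall A : algebra, V A -> forall a1 a2 b1 b2 : A,
      Cg b1 b2 a1 a2 <->
      (forall (B : algebra) (h : A -> B), V B -> embedding h ->
         forall v : nat -> B, v 0 = h a1 -> v 1 = h a2 -> v 2 = h b1 -> v 3 = h b2 ->
           sat v xi).

Definition val4 (A : Type) (a1 a2 b1 b2 : A) : nat -> A :=
  fun n => match n with 0 => a1 | 1 => a2 | 2 => b1 | _ => b2 end.

Definition EDPC (V : algebra -> Prop) : Prop :=
  exists alpha : list (term * term),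
    List.Forall (fun e => term_vars_in (fun n => n < 4) e.1 /\
                     term_vars_in (fun n => n < 4) e.2) alpha /\
    forall A : algebra, V A -> forall a1 a2 b1 b2 : A,
      Cg b1 b2 a1 a2 <->
      List.Forall (fun e => eval (val4 a1 a2 b1 b2) e.1 = eval (val4 a1 a2 b1 b2) e.2) alpha.

End UA.

(* Main.v *)
Require Import Defs.
From mathcomp Require Import all_boot.
From mathcomp Require boolp classical_sets filter.
From Stdlib Require List.
From Stdlib Require Import FunctionalExtensionality ProofIrrelevance ClassicalEpsilon Classical PropExtensionality.
Set Implicit Arguments.
Unset Strict Implicit.
Unset Printing Implicit Defensive.

Module UltraMod.
Import boolp classical_sets filter.

Record ultra (I : Type) := Ultra {
  uf : (I -> Prop) -> Prop;
  uf_T : uf (fun _ => True);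
  uf_0 : ~ uf (fun _ => False);
  uf_S : forall A B : I -> Prop, (forall i, A i -> B i) -> uf A -> uf B;
  uf_I : forall A B : I -> Prop, uf A -> uf B -> uf (fun i => A i /\ B i);
  uf_C : forall A : I -> Prop, uf A \/ uf (fun i => ~ A i) }.

Lemma exists_ultra_list (X : Type) (P : X -> Prop) :
  exists U : ultra {l : list X | List.Forall P l},
    forall x, P x -> uf U (fun i => List.In x (proj1_sig i)).
Proof.
pose I := {l : list X | List.Forall P l}.
pose F : set_system I := fun A => exists l : list X, List.Forall P l /\
   forall i : I, (forall x, List.In x l -> List.In x (proj1_sig i)) -> A i.
have FF : ProperFilter F.
  apply: Build_ProperFilter_ex.
    move=> A [l [Pl H]]; exists (exist _ l Pl); apply: H => //.
  split.
  - by exists nil; split => //.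
  - move=> A B [l1 [P1 H1]] [l2 [P2 H2]]; exists (l1 ++ l2); split.
      by apply/List.Forall_app.
    move=> i Hi; split; [apply: H1|apply: H2] => x Hx; apply: Hi;
      apply: List.in_or_app; tauto.
  - move=> A B AB [l [Pl H]]; exists l; split => // i Hi; apply: AB; exact: H.
have [G [GU FG]] := ultraFilterLemma FF.
have GP : ProperFilter G by case: GU.
unshelve eexists (@Ultra I G _ _ _ _ _).
- exact: filterT.
- exact: (filter_not_empty G).
- move=> A B AB; apply: filterS; exact: AB.
- move=> A B; exact: filterI.
- move=> A; exact: (in_ultra_setVsetC A GU).
- move=> x Px; apply: FG; exists [:: x]; split; first by constructor.
  by move=> i; apply; left.
Qed.

End UltraMod.
Import UltraMod.

Section Basic.
Variable L : signature.
Notation algebra := (algebra L).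
Notation term := (term L).

Lemma eval_ext (A : algebra) (u u' : nat -> A) (t : term) :
  (forall n, u n = u' n) -> eval u t = eval u' t.
Proof.
move=> H; elim: t => [n|f args IH] /=; first exact: H.
congr (op (f:=f) _); apply: functional_extensionality => i; exact: IH.
Qed.

Lemma hom_eval (A B : algebra) (h : A -> B) (u : nat -> A) (t : term) :
  hom h -> h (eval u t) = eval (fun n => h (u n)) t.
Proof.
move=> Hh; elim: t => [n|f args IH] //=.
rewrite Hh; congr (op (f:=f) _); apply: functional_extensionality => i; exact: IH.
Qed.

Lemma Cg_cong (A : algebra) (b1 b2 : A) : is_congruence (Cg b1 b2).
Proof.
split.
- by move=> x th [].
- by move=> x y H th Hth Hb; case: (Hth) => _ Hs _ _; apply: Hs; apply: H.
- by move=> x y z H1 H2 th Hth Hb; case: (Hth) => _ _ Ht _; apply: Ht (H1 _ _ _) (H2 _ _ _).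
- move=> f a b H th Hth Hb; case: (Hth) => _ _ _ Hc; apply: Hc => i; exact: H.
Qed.

Lemma Cg_gen (A : algebra) (b1 b2 : A) : Cg b1 b2 b1 b2.
Proof. by move=> th _. Qed.

Lemma Cg_hom (A B : algebra) (h : A -> B) (a1 a2 b1 b2 : A) : hom h ->
  Cg b1 b2 a1 a2 -> Cg (h b1) (h b2) (h a1) (h a2).
Proof.
move=> Hh H th Hth Hb.
apply: (H (fun x y => th (h x) (h y))) => //.
case: Hth => Hr Hs Ht Hc; split.
- by move=> x; apply: Hr.
- by move=> x y; apply: Hs.
- by move=> x y z; apply: Ht.
- by move=> f a b Hab; rewrite !Hh; apply: Hc.
Qed.

Lemma Cg_emb (V : algebra -> Prop) (A B : algebra) (h : B -> A) (a1 a2 b1 b2 : B) :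
  CEP V -> V A -> embedding h ->
  Cg (h b1) (h b2) (h a1) (h a2) -> Cg b1 b2 a1 a2.
Proof.
move=> HCEP VA Hh H.
have [Ph [PhC PhE]] := HCEP A B h VA Hh _ (Cg_cong b1 b2).
apply/PhE; apply: H => //; apply/PhE; exact: Cg_gen.
Qed.

Lemma emb_V (V : algebra -> Prop) (A B : algebra) (h : B -> A) :
  is_variety V -> V A -> embedding h -> V B.
Proof.
move=> [E HE] VA [Hh Hi]; apply/HE => e Ee v; apply: Hi.
rewrite !hom_eval //; exact: (proj1 (HE A) VA e Ee).
Qed.

Definition subc (A : algebra) (u : nat -> A) := {x : A | exists t : term, x = eval u t}.

Lemma sub_op_ex (A : algebra) (u : nat -> A) (f : sym L) (args : 'I_(ar f) -> subc u) :
  exists t : term, op (f:=f) (fun i => proj1_sig (args i)) = eval u t.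
Proof.
have H i : exists t : term, proj1_sig (args i) = eval u t := proj2_sig (args i).
exists (App (f:=f) (fun i => proj1_sig (constructive_indefinite_description _ (H i)))) => /=.
congr (op (f:=f) _); apply: functional_extensionality => i.
exact: (proj2_sig (constructive_indefinite_description _ (H i))).
Qed.

Definition Sub (A : algebra) (u : nat -> A) : algebra :=
  @Algebra L (subc u) (fun f args => exist _ _ (sub_op_ex args)).

Definition sgen (A : algebra) (u : nat -> A) (n : nat) : Sub u :=
  exist (fun x => exists t : term, x = eval u t) (u n) (ex_intro _ (Var L n) erefl).

Lemma sval_inj (A : algebra) (u : nat -> A) (x y : Sub u) :
  proj1_sig x = proj1_sig y -> x = y.
Proof.
case: x => x px; case: y => y py /= E; subst y; f_equal; exact: proof_irrelevance.
Qed.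

Lemma sval_emb (A : algebra) (u : nat -> A) :
  embedding (fun x : Sub u => proj1_sig x).
Proof. split; [by [] | exact: sval_inj]. Qed.

Lemma sval_eval (A : algebra) (u : nat -> A) (t : term) :
  proj1_sig (eval (sgen u) t) = eval u t.
Proof. rewrite (hom_eval _ _ (proj1 (sval_emb u))); exact: eval_ext. Qed.

Lemma sub_hom (A B : algebra) (u : nat -> A) (u' : nat -> B) :
  (forall s t : term, eval u s = eval u t -> eval u' s = eval u' t) ->
  exists h : Sub u -> B, [/\ hom h, (forall n, h (sgen u n) = u' n)
     & ((forall s t : term, eval u' s = eval u' t -> eval u s = eval u t) -> embedding h)].
Proof.
move=> H.
pose rep (x : Sub u) : term := proj1_sig (constructive_indefinite_description _ (proj2_sig x)).
have repE (x : Sub u) : proj1_sig x = eval u (rep x).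
  exact: (proj2_sig (constructive_indefinite_description _ (proj2_sig x))).
pose h x := eval u' (rep x).
have key x t : proj1_sig x = eval u t -> h x = eval u' t.
  by move=> E; apply: H; rewrite -repE.
have Hh : hom h.
  move=> f args; apply: (key _ (App (f:=f) (fun i => rep (args i)))) => /=.
  congr (op (f:=f) _); apply: functional_extensionality => i; exact: repE.
exists h; split => //.
- by move=> n; apply: (key _ (Var L n)).
- move=> H'; split => // x y E; apply: sval_inj; rewrite !repE; exact: H'.
Qed.

Definition prod_alg (A1 A2 : algebra) : algebra :=
  @Algebra L (A1 * A2)%type (fun f args => (op (f:=f) (fun i => (args i).1), op (f:=f) (fun i => (args i).2))).

Lemma fst_hom (A1 A2 : algebra) : hom (fun x : prod_alg A1 A2 => x.1).
Proof. by []. Qed.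
Lemma snd_hom (A1 A2 : algebra) : hom (fun x : prod_alg A1 A2 => x.2).
Proof. by []. Qed.

Lemma prod_V (V : algebra -> Prop) (A1 A2 : algebra) :
  is_variety V -> V A1 -> V A2 -> V (prod_alg A1 A2).
Proof.
move=> [E HE] V1 V2; apply/HE => e Ee v.
apply: injective_projections.
- rewrite !(hom_eval _ _ (@fst_hom A1 A2)); exact: (proj1 (HE _) V1 e Ee).
- rewrite !(hom_eval _ _ (@snd_hom A1 A2)); exact: (proj1 (HE _) V2 e Ee).
Qed.

End Basic.


Section CD.
Variable L : signature.
Notation algebra := (algebra L).
Notation term := (term L).

Lemma cjoin_cong (A : algebra) (th ps : A -> A -> Prop) : is_congruence (cjoin th ps).
Proof.
split.
- move=> x ch [Hr _ _ _] _ _; exact: Hr.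
- move=> x y H ch Hch H1 H2; case: (Hch) => _ Hs _ _; apply: Hs; exact: H.
- move=> x y z H H' ch Hch H1 H2; case: (Hch) => _ _ Ht _; apply: Ht (H _ _ _ _) (H' _ _ _ _) => //.
- move=> f a b H ch Hch H1 H2; case: (Hch) => _ _ _ Hc; apply: Hc => i; exact: H.
Qed.

Lemma cjoin_l (A : algebra) (th ps : A -> A -> Prop) x y : th x y -> cjoin th ps x y.
Proof. by move=> H ch _ H1 _; apply: H1. Qed.
Lemma cjoin_r (A : algebra) (th ps : A -> A -> Prop) x y : ps x y -> cjoin th ps x y.
Proof. by move=> H ch _ _ H2; apply: H2. Qed.

Lemma prod_Cg (V : algebra -> Prop) (HCD : congruence_distributive V) (A1 A2 : algebra)
  (a1 a2 b1 b2 : A1) (c1 c2 d1 d2 : A2) :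
  V (prod_alg A1 A2) ->
  Cg b1 b2 a1 a2 -> Cg d1 d2 c1 c2 ->
  Cg (A:=prod_alg A1 A2) (b1, d1) (b2, d2) (a1, c1) (a2, c2).
Proof.
move=> VP H1 H2.
set th := Cg (A:=prod_alg A1 A2) (b1, d1) (b2, d2).
have thC : is_congruence th := Cg_cong _ _.
pose e1 := fun x y : prod_alg A1 A2 => x.1 = y.1.
pose e2 := fun x y : prod_alg A1 A2 => x.2 = y.2.
have e1C : is_congruence e1.
  split; rewrite /e1.
  - by [].
  - by move=> x y E; symmetry.
  - by move=> x y z E E'; transitivity (fst y).
  - by move=> f a b H /=; congr (op _); apply: functional_extensionality; exact: H.
have e2C : is_congruence e2.
  split; rewrite /e2.
  - by [].
  - by move=> x y E; symmetry.
  - by move=> x y z E E'; transitivity (snd y).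
  - by move=> f a b H /=; congr (op _); apply: functional_extensionality; exact: H.
have [jr js jt jc] := cjoin_cong th e1.
have [kr ks kt kc] := cjoin_cong th e2.
have [tr ts tt tc] := thC.
have S1 : th (a1, c1) (a2, c1).
  have R : (fun u v : A1 => cjoin th e1 (u, c1) (v, c1)) a1 a2.
    apply: (H1 (fun u v : A1 => cjoin th e1 (u, c1) (v, c1))); last first.
      apply: (jt _ (b1, d1)); first by apply: cjoin_r.
      apply: (jt _ (b2, d2)); first by apply: cjoin_l; exact: Cg_gen.
      by apply: cjoin_r.
    split.
    + by move=> x /=; apply: jr.
    + by move=> x y; apply: js.
    + by move=> x y z; apply: jt.
    + move=> f a b Hab /=.
      apply: (jt _ (@op L (prod_alg A1 A2) f (fun i => (a i, c1)))); first by apply: cjoin_r.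
      apply: (jt _ (@op L (prod_alg A1 A2) f (fun i => (b i, c1)))); first by apply: jc.
      by apply: cjoin_r.
  have M : cmeet e2 (cjoin th e1) (a1, c1) (a2, c1) by split.
  move/(HCD _ VP e2 th e1 e2C thC e1C): M; apply => //.
  - by move=> u w [].
  - move=> u w [E2 E1]; have -> : u = w by apply: injective_projections.
    exact: tr.
have S2 : th (a2, c1) (a2, c2).
  have R : (fun u v : A2 => cjoin th e2 (a2, u) (a2, v)) c1 c2.
    apply: (H2 (fun u v : A2 => cjoin th e2 (a2, u) (a2, v))); last first.
      apply: (kt _ (b1, d1)); first by apply: cjoin_r.
      apply: (kt _ (b2, d2)); first by apply: cjoin_l; exact: Cg_gen.
      by apply: cjoin_r.
    split.
    + by move=> x /=; apply: kr.
    + by move=> x y; apply: ks.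
    + by move=> x y z; apply: kt.
    + move=> f a b Hab /=.
      apply: (kt _ (@op L (prod_alg A1 A2) f (fun i => (a2, a i)))); first by apply: cjoin_r.
      apply: (kt _ (@op L (prod_alg A1 A2) f (fun i => (a2, b i)))); first by apply: kc.
      by apply: cjoin_r.
  have M : cmeet e1 (cjoin th e2) (a2, c1) (a2, c2) by split.
  move/(HCD _ VP e1 th e2 e1C thC e2C): M; apply => //.
  - by move=> u w [].
  - move=> u w [E1 E2]; have -> : u = w by apply: injective_projections.
    exact: tr.
exact: tt S1 S2.
Qed.

End CD.


Section Ultra.
Variable L : signature.
Variables (I : Type) (U : ultra I) (N : I -> algebra L).

Lemma uf_false (A : I -> Prop) : uf U A -> (forall i, ~ A i) -> False.
Proof. move=> H H'; exact: (uf_0 (uf_S (B := fun _ => False) (fun i a => H' i a) H)). Qed.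

Lemma uf_not (A : I -> Prop) : ~ uf U A <-> uf U (fun i => ~ A i).
Proof.
split; first by case: (uf_C U A).
move=> H H'; apply: (uf_false (uf_I H H')); by move=> i [].
Qed.

Lemma uf_mono (A B : I -> Prop) : (forall i, A i -> B i) -> uf U A -> uf U B.
Proof. exact: uf_S. Qed.

Definition pr := forall i, N i.
Definition eqv (x y : pr) : Prop := uf U (fun i => x i = y i).

Lemma eqv_refl x : eqv x x.
Proof. apply: uf_mono (uf_T U); by []. Qed.
Lemma eqv_sym x y : eqv x y -> eqv y x.
Proof. by apply: uf_mono => i. Qed.
Lemma eqv_trans x y z : eqv x y -> eqv y z -> eqv x z.
Proof. move=> H H'; apply: uf_mono (uf_I H H') => i [-> ->] //. Qed.

Lemma sig_eq' (T : Type) (P : T -> Prop) (p q : sig P) : proj1_sig p = proj1_sig q -> p = q.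
Proof. case: p => x px; case: q => y py /= E; subst y; f_equal; exact: proof_irrelevance. Qed.

Definition ucar := {P : pr -> Prop | exists x, P = eqv x}.
Definition cls (x : pr) : ucar := exist _ (eqv x) (ex_intro _ x erefl).
Definition rep (p : ucar) : pr := proj1_sig (constructive_indefinite_description _ (proj2_sig p)).

Lemma cls_eq x y : cls x = cls y <-> eqv x y.
Proof.
split.
- move=> E; have : proj1_sig (cls y) x by rewrite -E; exact: eqv_refl.
  exact: eqv_sym.
- move=> H; rewrite /cls.
  have E : eqv x = eqv y.
    apply: functional_extensionality => z; apply: propositional_extensionality.
    split => H'; [exact: eqv_trans (eqv_sym H) H' | exact: eqv_trans H H'].
  exact: sig_eq'.
Qed.

Lemma cls_rep p : cls (rep p) = p.
Proof.
rewrite /rep; case: (constructive_indefinite_description _ _) => x /= Hx.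
case: p Hx => P HP /= Hx; subst P; rewrite /cls; f_equal; exact: proof_irrelevance.
Qed.

Lemma rep_cls x : eqv (rep (cls x)) x.
Proof. by apply/cls_eq; rewrite cls_rep. Qed.

Definition uop (f : sym L) (args : 'I_(ar f) -> ucar) : ucar :=
  cls (fun i => op (f:=f) (fun j => rep (args j) i)).

Definition UP : algebra L := @Algebra L ucar uop.

Lemma uf_fin n (P : 'I_n -> I -> Prop) :
  (forall j, uf U (P j)) -> uf U (fun i => forall j, P j i).
Proof.
move=> H.
have G (s : seq 'I_n) : uf U (fun i => forall j, j \in s -> P j i).
  elim: s => [|a s IH]; first by apply: uf_mono (uf_T U).
  apply: uf_mono (uf_I (H a) IH) => i [Ha Hs] j; rewrite in_cons.
  by case/orP => [/eqP -> //|]; apply: Hs.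
apply: uf_mono (G (enum 'I_n)) => i Hi j; apply: Hi; by rewrite mem_enum.
Qed.

Lemma uop_cls f (xs : 'I_(ar f) -> pr) :
  @op L UP f (fun j => cls (xs j)) = cls (fun i => op (f:=f) (fun j => xs j i)).
Proof.
apply/cls_eq; apply: uf_mono (uf_fin (fun j => rep_cls (xs j))) => i Hi.
by congr (op _); apply: functional_extensionality => j; apply: Hi.
Qed.

Lemma ueval (u : nat -> pr) (t : term L) :
  eval (A:=UP) (fun n => cls (u n)) t = cls (fun i => eval (fun n => u n i) t).
Proof.
elim: t => [n|f args IH] //=.
rewrite -uop_cls /=; congr (uop _); apply: functional_extensionality => j; exact: IH.
Qed.

Lemma assign_rep (w : nat -> UP) : w = (fun n => cls (rep (w n))).
Proof. apply: functional_extensionality => n; by rewrite cls_rep. Qed.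

Theorem los (phi : formula L) (u : nat -> pr) :
  sat (A:=UP) (fun n => cls (u n)) phi <-> uf U (fun i => sat (fun n => u n i) phi).
Proof.
elim: phi u => [s t|| p IH | p IHp q IHq | p IHp q IHq | p IHp q IHq | x p IH | x p IH] u /=.
- by rewrite !ueval cls_eq.
- by split => [[]|H]; exact: (uf_false H (fun _ x => x)).
- rewrite IH uf_not; by [].
- rewrite IHp IHq; split; first by case=> H1 H2; apply: uf_I.
  by move=> H; split; apply: uf_mono H => i [].
- rewrite IHp IHq; split.
  + by case=> H; [apply: uf_mono H => i; left|apply: uf_mono H => i; right].
  + move=> H; case: (uf_C U (fun i => sat (fun n => u n i) p)) => Hp; first by left.
    right; apply: uf_mono (uf_I H Hp) => i [[Hp'|Hq'] Hn] //; case: (Hn Hp').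
- rewrite IHp IHq; split.
  + move=> H; case: (uf_C U (fun i => sat (fun n => u n i) p)) => Hp.
      by apply: uf_mono (H Hp) => i Hq _.
    by apply: uf_mono Hp => i Hp Hp'.
  + move=> H Hp; apply: uf_mono (uf_I H Hp) => i [] //; exact.
- have updE (a : pr) : upd (fun n => cls (u n)) x (cls a) =
      (fun n => cls (upd u x a n)).
    by apply: functional_extensionality => n; rewrite /upd; case: (n == x).
  have updE' (a : pr) i : (fun n => upd u x a n i) = upd (fun n => u n i) x (a i).
    by apply: functional_extensionality => n; rewrite /upd; case: (n == x).
  split.
  + move=> H; apply: NNPP => /uf_not H'.
    pose a (i : I) : N i := match excluded_middle_informative
        (exists b : N i, ~ sat (upd (fun n => u n i) x b) p) with
      | left e => proj1_sig (constructive_indefinite_description _ e)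
      | right _ => u 0 i end.
    have := H (cls a); rewrite updE IH => Ha.
    apply: (uf_false (uf_I Ha H')) => i [].
    rewrite updE' => Hs Hn; apply: Hn => b.
    move: Hs; rewrite /a; case: excluded_middle_informative => [e|n].
      by case: (constructive_indefinite_description _ e).
    by move=> _; apply: NNPP => Hb; apply: n; exists b.
  + move=> H a; rewrite -(cls_rep a) updE IH.
    by apply: uf_mono H => i Hi; rewrite updE'; apply: Hi.
- have updE (a : pr) : upd (fun n => cls (u n)) x (cls a) =
      (fun n => cls (upd u x a n)).
    by apply: functional_extensionality => n; rewrite /upd; case: (n == x).
  have updE' (a : pr) i : (fun n => upd u x a n i) = upd (fun n => u n i) x (a i).
    by apply: functional_extensionality => n; rewrite /upd; case: (n == x).
  split.
  + case=> a; rewrite -(cls_rep a) updE IH => H.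
    by apply: uf_mono H => i Hi; exists (rep a i); rewrite -updE'.
  + move=> H.
    pose a (i : I) : N i := match excluded_middle_informative
        (exists b : N i, sat (upd (fun n => u n i) x b) p) with
      | left e => proj1_sig (constructive_indefinite_description _ e)
      | right _ => u 0 i end.
    exists (cls a); rewrite updE IH; apply: uf_mono H => i [b Hb].
    rewrite updE' /a; case: excluded_middle_informative => [e|n].
      by case: (constructive_indefinite_description _ e).
    by exfalso; apply: n; exists b.
Qed.

End Ultra.


Section Fmla.
Variable L : signature.
Notation term := (term L).
Notation formula := (formula L).

Lemma tv_mono (P Q : nat -> Prop) (t : term) :
  (forall n, P n -> Q n) -> term_vars_in P t -> term_vars_in Q t.
Proof. move=> H; elim: t => [n|f args IH] /=; [exact: H|move=> Ha i; exact: IH]. Qed.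

Lemma fv_mono (phi : formula) : forall (P Q : nat -> Prop),
  (forall n, P n -> Q n) -> fv_in P phi -> fv_in Q phi.
Proof.
elim: phi => [s t||p IH|p IHp q IHq|p IHp q IHq|p IHp q IHq|x p IH|x p IH] P Q H /=.
- by case=> H1 H2; split; apply: tv_mono H _.
- by [].
- exact: IH.
- by case=> H1 H2; split; [apply: IHp H1|apply: IHq H2].
- by case=> H1 H2; split; [apply: IHp H1|apply: IHq H2].
- by case=> H1 H2; split; [apply: IHp H1|apply: IHq H2].
- by apply: IH => n [->|/H]; [left|right].
- by apply: IH => n [->|/H]; [left|right].
Qed.

Lemma fin_max n (k : 'I_n -> nat) : exists K, forall i, k i <= K.
Proof.
exists (\max_(i < n) k i) => i; exact: (leq_bigmax i).
Qed.

Lemma term_bound (t : term) : exists K, term_vars_in (fun n => n < K) t.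
Proof.
elim: t => [n|f args IH] /=; first by exists n.+1.
have [k Hk] : exists k : 'I_(ar f) -> nat, forall i, term_vars_in (fun n => n < k i) (args i).
  exists (fun i => proj1_sig (constructive_indefinite_description _ (IH i))) => i.
  exact: (proj2_sig (constructive_indefinite_description _ (IH i))).
have [K HK] := fin_max k.
exists K => i; apply: tv_mono (Hk i) => n Hn; exact: leq_trans Hn (HK i).
Qed.

Lemma qf_bound (phi : formula) : qfree phi -> exists K, fv_in (fun n => n < K) phi.
Proof.
elim: phi => [s t||p IH|p IHp q IHq|p IHp q IHq|p IHp q IHq|x p IH|x p IH] /= Hq.
- have [K1 H1] := term_bound s; have [K2 H2] := term_bound t.
  exists (maxn K1 K2); split.
  + apply: tv_mono H1 => n Hn; by rewrite leq_max Hn.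
  + apply: tv_mono H2 => n Hn; by rewrite leq_max Hn orbT.
- by exists 0.
- exact: IH.
- case: Hq => Hp Hq'; have [K1 H1] := IHp Hp; have [K2 H2] := IHq Hq'.
  exists (maxn K1 K2); split.
  + apply: fv_mono H1 => n Hn; by rewrite leq_max Hn.
  + apply: fv_mono H2 => n Hn; by rewrite leq_max Hn orbT.
- case: Hq => Hp Hq'; have [K1 H1] := IHp Hp; have [K2 H2] := IHq Hq'.
  exists (maxn K1 K2); split.
  + apply: fv_mono H1 => n Hn; by rewrite leq_max Hn.
  + apply: fv_mono H2 => n Hn; by rewrite leq_max Hn orbT.
- case: Hq => Hp Hq'; have [K1 H1] := IHp Hp; have [K2 H2] := IHq Hq'.
  exists (maxn K1 K2); split.
  + apply: fv_mono H1 => n Hn; by rewrite leq_max Hn.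
  + apply: fv_mono H2 => n Hn; by rewrite leq_max Hn orbT.
- by [].
- by [].
Qed.

Lemma eval_coinc (A : algebra L) (P : nat -> Prop) (u u' : nat -> A) (t : term) :
  term_vars_in P t -> (forall n, P n -> u n = u' n) -> eval u t = eval u' t.
Proof.
move=> Ht H; elim: t Ht => [n|f args IH] /= Ht; first exact: H.
congr (op _); apply: functional_extensionality => i; exact: IH.
Qed.

Lemma sat_coinc_qf (A : algebra L) (P : nat -> Prop) (u u' : nat -> A) (phi : formula) :
  qfree phi -> fv_in P phi -> (forall n, P n -> u n = u' n) -> (sat u phi <-> sat u' phi).
Proof.
move=> + + H.
elim: phi => [s t||p IH|p IHp q IHq|p IHp q IHq|p IHp q IHq|x p IH|x p IH] //= Hq Hf.
- by rewrite (eval_coinc (proj1 Hf) H) (eval_coinc (proj2 Hf) H).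
- by rewrite (IH Hq Hf).
- by rewrite (IHp (proj1 Hq) (proj1 Hf)) (IHq (proj2 Hq) (proj2 Hf)).
- by rewrite (IHp (proj1 Hq) (proj1 Hf)) (IHq (proj2 Hq) (proj2 Hf)).
- by rewrite (IHp (proj1 Hq) (proj1 Hf)) (IHq (proj2 Hq) (proj2 Hf)).
Qed.

Lemma sat_qf_transfer (A B : algebra L) (v : nat -> A) (w : nat -> B) (phi : formula) :
  qfree phi -> (forall s t : term, eval v s = eval v t <-> eval w s = eval w t) ->
  (sat v phi <-> sat w phi).
Proof.
move=> + H.
elim: phi => [s t||p IH|p IHp q IHq|p IHp q IHq|p IHp q IHq|x p IH|x p IH] //= Hq.
- by rewrite (IH Hq).
- by rewrite (IHp (proj1 Hq)) (IHq (proj2 Hq)).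
- by rewrite (IHp (proj1 Hq)) (IHq (proj2 Hq)).
- by rewrite (IHp (proj1 Hq)) (IHq (proj2 Hq)).
Qed.

Definition close (xs : seq nat) (phi : formula) : formula := foldr (fun x p => FAll x p) phi xs.

Lemma close_intro (A : algebra L) (xs : seq nat) (phi : formula) (u : nat -> A) :
  (forall w : nat -> A, (forall n, n \notin xs -> w n = u n) -> sat w phi) -> sat u (close xs phi).
Proof.
elim: xs u => [|x xs IH] u H /=; first by apply: H.
move=> b; apply: IH => w Hw; apply: H => n; rewrite in_cons negb_or => /andP [nx nxs].
rewrite Hw // /upd; by rewrite (negbTE nx).
Qed.

Lemma close_elim (A : algebra L) (xs : seq nat) (phi : formula) (u : nat -> A) :
  sat u (close xs phi) -> forall w : nat -> A, (forall n, n \notin xs -> w n = u n) -> sat w phi.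
Proof.
elim: xs u => [|x xs IH] u /= H w Hw.
- have -> : w = u by apply: functional_extensionality => n; apply: Hw.
  exact: H.
- apply: (IH _ (H (w x))) => n nxs; rewrite /upd; case: eqP => [->//|/eqP nx].
  by apply: Hw; rewrite in_cons negb_or nx.
Qed.

Lemma close_fv (xs : seq nat) (phi : formula) (P : nat -> Prop) :
  fv_in (fun n => n \in xs \/ P n) phi -> fv_in P (close xs phi).
Proof.
elim: xs P => [|x xs IH] P H /=.
- apply: fv_mono H => n [] //.
- apply: IH; apply: fv_mono H => n; rewrite in_cons => -[/orP [/eqP ->|]|]; tauto.
Qed.

Lemma close_univ (xs : seq nat) (phi : formula) : qfree phi -> universal (close xs phi).
Proof. move=> H; elim: xs => [|x xs IH] /=; [exact: univ_qf|exact: univ_all]. Qed.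

Lemma close_sentence (K : nat) (phi : formula) :
  fv_in (fun n => n < K) phi -> sentence (close (iota 0 K) phi).
Proof.
move=> H; apply: close_fv; apply: fv_mono H => n Hn; left; by rewrite mem_iota.
Qed.

Definition litf (l : term * term * bool) : formula :=
  if l.2 then FEq l.1.1 l.1.2 else FNot (FEq l.1.1 l.1.2).

Definition conjl (ls : list (term * term * bool)) : formula :=
  foldr (fun l p => FAnd (litf l) p) (FNot (FFalse L)) ls.

Lemma conjl_qf ls : qfree (conjl ls).
Proof. elim: ls => [|l ls IH] //=; split => //; rewrite /litf; by case: l.2. Qed.

Lemma sat_conjl (A : algebra L) (w : nat -> A) ls :
  sat w (conjl ls) <-> (forall l, List.In l ls -> sat w (litf l)).
Proof.
elim: ls => [|l ls IH] /=; first by split => // _ [].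
rewrite IH; split.
- by case=> H1 H2 l' [<-|]; [|apply: H2].
- by move=> H; split; [apply: H; left|move=> l' Hl'; apply: H; right].
Qed.

Lemma sat_litf (A : algebra L) (w : nat -> A) l :
  sat w (litf l) <-> ((eval w l.1.1 = eval w l.1.2) <-> l.2 = true).
Proof.
rewrite /litf; case: l.2 => /=; split.
- by move=> H; split.
- by case=> _; apply.
- by move=> H; split => // /H.
- by case=> H _ /H.
Qed.

End Fmla.


Section Main.
Variable L : signature.
Notation algebra := (algebra L).
Notation term := (term L).
Notation formula := (formula L).
Variable V : algebra -> Prop.
Variable HV : is_variety V.
Variable HCD : congruence_distributive V.
Variable HCEP : CEP V.
Variable xi : formula.
Variable xiqf : qfree xi.
Variable HPD : forall A : algebra, V A -> forall a1 a2 b1 b2 : A,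
      Cg b1 b2 a1 a2 <->
      (forall (B : algebra) (h : A -> B), V B -> embedding h ->
         forall v : nat -> B, v 0 = h a1 -> v 1 = h a2 -> v 2 = h b1 -> v 3 = h b2 ->
           sat v xi).
Variable T : theory L.
Variable HT2 : model_complete T.
Variable HT3 : forall phi, sentence phi -> universal phi -> (entails (Th V) phi <-> entails T phi).
Variable HT4 : forall M : algebra, models M (Th V) ->
         forall (phi : formula) (v : nat -> M),
           (forall (N : algebra) (e : M -> N), models N T -> embedding e ->
               sat (fun n => e (v n)) phi)
           \/
           (forall (N : algebra) (e : M -> N), models N T -> embedding e ->
               ~ sat (fun n => e (v n)) phi).

Definition Psi (N : algebra) (w : nat -> N) : Prop :=
  forall v : nat -> N, v 0 = w 0 -> v 1 = w 1 -> v 2 = w 2 -> v 3 = w 3 -> sat v xi.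

Definition v4 (A : algebra) (w : nat -> A) : nat -> A := val4 (w 0) (w 1) (w 2) (w 3).

Definition R (A : algebra) (w : nat -> A) : Prop := Cg (w 2) (w 3) (w 0) (w 1).

Fixpoint ren (t : term) : term :=
  match t with
  | Var n => Var L (if n < 4 then n else 3)
  | App f args => App (fun i => ren (args i))
  end.

Lemma v4E (A : algebra) (w : nat -> A) n : v4 w n = w (if n < 4 then n else 3).
Proof. by case: n => [|[|[|[|n]]]]. Qed.

Lemma eval_ren (A : algebra) (w : nat -> A) (t : term) : eval w (ren t) = eval (v4 w) t.
Proof.
elim: t => [n|f args IH] /=; first by rewrite v4E.
congr (op _); apply: functional_extensionality => i; exact: IH.
Qed.

Lemma ren_vars (t : term) : term_vars_in (fun n => n < 4) (ren t).
Proof. elim: t => [n|f args IH] /=; [by case: ifP|exact: IH]. Qed.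

Lemma v4v4 (A : algebra) (w : nat -> A) n : v4 (v4 w) n = v4 w n.
Proof. by case: n => [|[|[|[|n]]]]. Qed.

Lemma Psi_agree (N : algebra) (w w' : nat -> N) :
  w 0 = w' 0 -> w 1 = w' 1 -> w 2 = w' 2 -> w 3 = w' 3 -> Psi w -> Psi w'.
Proof.
move=> E0 E1 E2 E3 H v H0 H1 H2 H3; apply: H; congruence.
Qed.

Lemma V_models (A : algebra) : V A -> models A (Th V).
Proof. by move=> VA phi [_ H] v; apply: H. Qed.

Lemma T_V (N : algebra) : models N T -> V N.
Proof.
move=> NT; case: HV => E HE; apply/HE => e Ee v.
have [K1 H1] := term_bound e.1; have [K2 H2] := term_bound e.2.
pose phi : formula := FEq e.1 e.2.
have Hfv : fv_in (fun n => n < maxn K1 K2) phi.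
  split.
  + apply: tv_mono H1 => n Hn; by rewrite leq_max Hn.
  + apply: tv_mono H2 => n Hn; by rewrite leq_max Hn orbT.
have Hs := close_sentence Hfv.
have Hu : universal (close (iota 0 (maxn K1 K2)) phi) by apply: close_univ.
have Hent : entails (Th V) (close (iota 0 (maxn K1 K2)) phi).
  move=> A AT u; apply: AT; split => // B VB u'; apply: close_intro => w _.
  exact: (proj1 (HE B) VB e Ee w).
have := (proj1 (HT3 Hs Hu) Hent) N NT v.
move/close_elim => /(_ v) H; exact: H.
Qed.

Lemma Phi_ex : exists Phi : formula, forall (N : algebra) (w : nat -> N), sat w Phi <-> Psi w.
Proof.
have [K HK] := qf_bound xiqf.
exists (close (iota 4 K) xi) => N w; split.
- move=> H v H0 H1 H2 H3.
  pose w' n := if (4 <= n) && (n < 4 + K) then v n else w n.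
  have Hw' : sat w' xi.
    apply: (close_elim H) => n; rewrite mem_iota /w' => /negbTE -> //.
  apply/(sat_coinc_qf xiqf HK (u := w') (u' := v)) => // n nK.
  rewrite /w'; case: ifP => // /negbT Hn.
  have n4 : n < 4.
    case: (ltnP n 4) => // H4; exfalso; move: Hn.
    by rewrite H4 (leq_trans nK (leq_addl 4 K)).
  by case: n {nK Hn} n4 => [|[|[|[|n]]]] //= _; rewrite ?H0 ?H1 ?H2 ?H3.
- move=> H; apply: close_intro => w' Hw'; apply: H; apply: Hw'; by rewrite mem_iota.
Qed.

Lemma UP_models (I : Type) (U : ultra I) (N : I -> algebra) :
  (forall i, models (N i) T) -> models (UP U N) T.
Proof.
move=> H phi Tphi u; rewrite (assign_rep u); apply/los.
apply: uf_mono (uf_T U) => i _; exact: H.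
Qed.

Lemma C1 (B : algebra) (v : nat -> B) : V B ->
  exists (N : algebra) (w : nat -> N), models N T /\
    forall s t : term, eval v s = eval v t <-> eval w s = eval w t.
Proof.
move=> VB.
pose D := fun l : term * term * bool => (eval v l.1.1 = eval v l.1.2 <-> l.2 = true).
have [U HU] := exists_ultra_list D.
have Hi (i : {l : list (term * term * bool) | List.Forall D l}) :
    exists p : {N : algebra & nat -> N}, models (projT1 p) T /\ sat (projT2 p) (conjl (proj1_sig i)).
  apply: NNPP => Hn.
  have Hn' : forall (N : algebra) (w : nat -> N), models N T -> ~ sat w (conjl (proj1_sig i)).
    by move=> N w NT Hs; apply: Hn; exists (existT _ N w).
  have [K HK] := qf_bound (conjl_qf (proj1_sig i)).
  pose sig : formula := close (iota 0 K) (FNot (conjl (proj1_sig i))).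
  have Hs : sentence sig by apply: close_sentence.
  have Hu : universal sig by apply: close_univ; exact: conjl_qf.
  have Hent : entails T sig.
    by move=> N NT u; apply: close_intro => w _; apply: Hn'.
  have := (proj2 (HT3 Hs Hu) Hent) B (V_models VB) v.
  move/close_elim => /(_ v (fun _ _ => erefl)) /=; apply.
  apply/sat_conjl => l Hl; apply/sat_litf.
  by move: (proj2_sig i) => /List.Forall_forall /(_ l Hl).
pose P i := proj1_sig (constructive_indefinite_description _ (Hi i)).
have PP i := proj2_sig (constructive_indefinite_description _ (Hi i)).
pose Nf i := projT1 (P i).
pose wf i : nat -> Nf i := projT2 (P i).
exists (UP U Nf), (fun n => cls U (fun i => wf i n)); split.
  by apply: UP_models => i; exact: (proj1 (PP i)).
move=> s t.
have [E|E] := classic (eval v s = eval v t).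
- have Dl : D (s, t, true) by rewrite /D /=; split.
  have := HU _ Dl => Hin.
  have : sat (A := UP U Nf) (fun n => cls U (fun i => wf i n)) (litf (s, t, true)).
    apply/los; apply: uf_mono Hin => i Hin'.
    by move: (proj2 (PP i)) => /sat_conjl /(_ _ Hin').
  by move=> /= ->; split.
- have Dl : D (s, t, false) by rewrite /D /=; split.
  have := HU _ Dl => Hin.
  have : sat (A := UP U Nf) (fun n => cls U (fun i => wf i n)) (litf (s, t, false)).
    apply/los; apply: uf_mono Hin => i Hin'.
    by move: (proj2 (PP i)) => /sat_conjl /(_ _ Hin').
  by move=> /= H; split.
Qed.

Lemma K_fwd (A : algebra) (a : nat -> A) (N : algebra) (w : nat -> N) :
  V A -> models N T ->
  (forall s t : term, eval (v4 a) s = eval (v4 a) t <-> eval (v4 w) s = eval (v4 w) t) ->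
  R a -> Psi w.
Proof.
move=> VA NT EQ Ra.
have [h [hh hg _]] := sub_hom (u := v4 a) (u' := v4 w) (fun s t => proj1 (EQ s t)).
have RM : R (sgen (v4 a)).
  apply: (Cg_emb HCEP VA (sval_emb (v4 a))); exact: Ra.
have := Cg_hom hh RM; rewrite !hg /= => Hc.
have VN := T_V NT.
move=> v H0 H1 H2 H3.
apply: ((proj1 (HPD VN (w 0) (w 1) (w 2) (w 3)) Hc) N id VN _ v H0 H1 H2 H3).
by split.
Qed.

Lemma sgen3 (A : algebra) (a : nat -> A) n : sgen (v4 a) n.+3 = sgen (v4 a) 3.
Proof. by apply: sval_inj. Qed.

Lemma K_bwd (A : algebra) (a : nat -> A) (N : algebra) (w : nat -> N) :
  V A -> models N T ->
  (forall s t : term, eval (v4 a) s = eval (v4 a) t <-> eval (v4 w) s = eval (v4 w) t) ->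
  Psi w -> R a.
Proof.
move=> VA NT EQ Pw.
have [Phi HPhi] := Phi_ex.
have VM : V (Sub (v4 a)) := emb_V HV VA (sval_emb (v4 a)).
have [e1 [e1h e1g e1e]] := sub_hom (u := v4 a) (u' := v4 w) (fun s t => proj1 (EQ s t)).
have e1emb := e1e (fun s t => proj2 (EQ s t)).
suff RM : R (sgen (v4 a)).
  have := Cg_hom (proj1 (sval_emb (v4 a))) RM; by [].
apply/(HPD VM) => B h VB hemb v Hv0 Hv1 Hv2 Hv3.
have [N' [w' [N'T EQ']]] := C1 v VB.
have hsg n : h (sgen (v4 a) n) = v4 v n.
  case: n => [|[|[|n]]] /=; [by rewrite Hv0 | by rewrite Hv1 | by rewrite Hv2 | by rewrite sgen3 Hv3].
have Hh x : h (eval (sgen (v4 a)) x) = eval v (ren x).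
  by rewrite (hom_eval _ _ (proj1 hemb)) eval_ren; apply: eval_ext => n; exact: hsg.
have EQM : forall s t : term, eval (v4 a) s = eval (v4 a) t <-> eval (v4 w') s = eval (v4 w') t.
  move=> s t; rewrite -[eval (v4 w') s]eval_ren -[eval (v4 w') t]eval_ren -EQ' -!Hh.
  rewrite -(sval_eval (v4 a) s) -(sval_eval (v4 a) t); split.
  - by move/sval_inj ->.
  - by move/(proj2 hemb) ->.
have [e2 [e2h e2g e2e]] := sub_hom (u := v4 a) (u' := v4 w') (fun s t => proj1 (EQM s t)).
have e2emb := e2e (fun s t => proj2 (EQM s t)).
case: (HT4 (V_models VM) Phi (sgen (v4 a))) => [Hall|Hnone].
- have := Hall N' e2 N'T e2emb; rewrite HPhi => Hps.
  have Hw' : Psi w' by apply: (Psi_agree _ _ _ _ Hps); rewrite e2g.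
  apply/(sat_qf_transfer xiqf EQ'); exact: Hw' w' erefl erefl erefl erefl.
- exfalso; apply: (Hnone N e1 NT e1emb); rewrite HPhi.
  by apply: (Psi_agree _ _ _ _ Pw); rewrite e1g.
Qed.

Definition Sig (s t : term) : Prop :=
  term_vars_in (fun n => n < 4) s /\ term_vars_in (fun n => n < 4) t /\
  forall (A : algebra), V A -> forall a : nat -> A, R a -> eval (v4 a) s = eval (v4 a) t.

Definition NonSig (q : term * term) : Prop :=
  ~ (forall (A : algebra), V A -> forall a : nat -> A, R a -> eval (v4 a) q.1 = eval (v4 a) q.2).

Lemma eval_ren4 (A : algebra) (w : nat -> A) t : eval (v4 w) (ren t) = eval (v4 w) t.
Proof. by rewrite eval_ren; apply: eval_ext; exact: v4v4. Qed.

Lemma EQ4_of_full (A N : algebra) (a : nat -> A) (w : nat -> N) :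
  (forall s t : term, eval (v4 a) s = eval (v4 a) t <-> eval w s = eval w t) ->
  forall s t : term, eval (v4 a) s = eval (v4 a) t <-> eval (v4 w) s = eval (v4 w) t.
Proof.
move=> H s t; rewrite -[eval (v4 w) s]eval_ren -[eval (v4 w) t]eval_ren -H.
by rewrite !eval_ren4.
Qed.

Definition unit_alg : algebra := @Algebra L unit (fun _ _ => tt).

Lemma unit_V : V unit_alg.
Proof. case: HV => E HE; apply/HE => e _ v; by case: (eval _ _); case: (eval _ _). Qed.

Lemma eval_v4_fst (A1 A2 : algebra) (a1 : nat -> A1) (a2 : nat -> A2) t :
  (eval (v4 (fun n => (a1 n, a2 n) : prod_alg A1 A2)) t).1 = eval (v4 a1) t.
Proof. rewrite (hom_eval _ _ (@fst_hom _ A1 A2)); apply: eval_ext => -[|[|[|n]]] //. Qed.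

Lemma eval_v4_snd (A1 A2 : algebra) (a1 : nat -> A1) (a2 : nat -> A2) t :
  (eval (v4 (fun n => (a1 n, a2 n) : prod_alg A1 A2)) t).2 = eval (v4 a2) t.
Proof. rewrite (hom_eval _ _ (@snd_hom _ A1 A2)); apply: eval_ext => -[|[|[|n]]] //. Qed.

Lemma fin_witness (F : list (term * term)) : List.Forall NonSig F ->
  exists p : {A : algebra & nat -> A}, [/\ V (projT1 p), R (projT2 p) &
    forall q, List.In q F -> eval (v4 (projT2 p)) q.1 <> eval (v4 (projT2 p)) q.2].
Proof.
elim: F => [|q F IH] HF.
- exists (existT (fun A : algebra => nat -> A) unit_alg (fun _ => (tt : unit_alg))); split => //=; first exact: unit_V.
- move: HF => /List.Forall_cons_iff [Hq HF].
  have [[A1 a1] [V1 R1 N1]] := IH HF.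
  have [A2 [V2 [a2 [R2 N2]]]] : exists A2 : algebra, V A2 /\ exists a2 : nat -> A2,
      R a2 /\ eval (v4 a2) q.1 <> eval (v4 a2) q.2.
    apply: NNPP => H; apply: Hq => A VA a Ra; apply: NNPP => Hne; apply: H.
    by exists A; split => //; exists a.
  have VP := prod_V HV V1 V2.
  exists (existT (fun A : algebra => nat -> A) (prod_alg A1 A2) (fun n => ((a1 n, a2 n) : prod_alg A1 A2))); split => //=.
  + exact: (prod_Cg HCD VP R1 R2).
  + move=> q' Hq' E; case: Hq' => [Eq|Hq'].
    * subst q'; apply: N2; by rewrite -(eval_v4_snd a1 a2 q.1) -(eval_v4_snd a1 a2 q.2) E.
    * apply: (N1 _ Hq'); by rewrite -(eval_v4_fst a1 a2 q'.1) -(eval_v4_fst a1 a2 q'.2) E.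
Qed.

Lemma generic : exists p : {G : algebra & nat -> G}, [/\ V (projT1 p), R (projT2 p) &
  forall s t : term, term_vars_in (fun n => n < 4) s -> term_vars_in (fun n => n < 4) t ->
    eval (v4 (projT2 p)) s = eval (v4 (projT2 p)) t -> Sig s t].
Proof.
have [U HU] := exists_ultra_list NonSig.
have Hi (i : {F : list (term * term) | List.Forall NonSig F}) :
    exists p : {N : algebra & nat -> N}, [/\ models (projT1 p) T, Psi (projT2 p) &
      forall q, List.In q (proj1_sig i) -> eval (v4 (projT2 p)) q.1 <> eval (v4 (projT2 p)) q.2].
  have [[A a] [VA Ra Na]] := fin_witness (proj2_sig i).
  have [N [w [NT EQ]]] := C1 (v4 a) VA.
  have EQ4 := EQ4_of_full EQ.
  exists (existT _ N w); split => //=.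
  + exact: K_fwd VA NT EQ4 Ra.
  + move=> q Hq E; apply: (Na q Hq); apply/EQ4; exact E.
pose P i := proj1_sig (constructive_indefinite_description _ (Hi i)).
have PP i := proj2_sig (constructive_indefinite_description _ (Hi i)).
pose Nf i := projT1 (P i).
pose wf i : nat -> Nf i := projT2 (P i).
have GT : models (UP U Nf) T by apply: UP_models => i; case: (PP i).
have VG := T_V GT.
have [Phi HPhi] := Phi_ex.
have PsiG : Psi (N := UP U Nf) (fun n => cls U (fun i => wf i n)).
  apply/HPhi; apply/los; apply: uf_mono (uf_T U) => i _; apply/HPhi; by case: (PP i).
exists (existT (fun A : algebra => nat -> A) (UP U Nf) (fun n => cls U (fun i => wf i n))); split => //=.
- exact: (K_bwd VG GT (fun s t => iff_refl _) PsiG).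
- move=> s t Hs Ht E; split => //; split => //.
  apply: NNPP => Hn.
  have Hin := HU (s, t) Hn.
  have v4g : v4 (A := UP U Nf) (fun n => cls U (fun i => wf i n)) = (fun n => cls U (fun i => v4 (wf i) n)).
    by apply: functional_extensionality => -[|[|[|n]]].
  have : sat (A := UP U Nf) (v4 (A := UP U Nf) (fun n => cls U (fun i => wf i n))) (FEq s t) by [].
  rewrite v4g => /los H.
  apply: (uf_false (uf_I H Hin)) => i [Heq Hin'].
  by case: (PP i) => _ _ /(_ _ Hin').
Qed.

Lemma star (A : algebra) (a : nat -> A) : V A ->
  (forall s t, Sig s t -> eval (v4 a) s = eval (v4 a) t) -> R a.
Proof.
move=> VA HS.
have [[G g] [VG RG HG]] := generic.
have Hst : forall s t : term, eval (v4 g) s = eval (v4 g) t -> eval (v4 a) s = eval (v4 a) t.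
  move=> s t E; rewrite -(eval_ren4 a s) -(eval_ren4 a t); apply: HS.
  apply: HG; [exact: ren_vars|exact: ren_vars|by rewrite !eval_ren4].
have [h [hh hg _]] := sub_hom (u := v4 g) (u' := v4 a) Hst.
have RM : R (sgen (v4 g)) by apply: (Cg_emb HCEP VG (sval_emb (v4 g))); exact: RG.
have := Cg_hom hh RM; by rewrite !hg.
Qed.

Lemma finite_alpha : exists al : list (term * term),
  List.Forall (fun e => Sig e.1 e.2) al /\
  forall A : algebra, V A -> forall a : nat -> A,
    List.Forall (fun e => eval (v4 a) e.1 = eval (v4 a) e.2) al -> R a.
Proof.
apply: NNPP => Hno.
pose SigP (e : term * term) := Sig e.1 e.2.
have [U HU] := exists_ultra_list SigP.
have Hi (i : {l : list (term * term) | List.Forall SigP l}) :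
    exists p : {N : algebra & nat -> N}, [/\ models (projT1 p) T, ~ Psi (projT2 p) &
      forall e, List.In e (proj1_sig i) -> eval (v4 (projT2 p)) e.1 = eval (v4 (projT2 p)) e.2].
  have [A [VA [a [Ha Ra]]]] : exists A : algebra, V A /\ exists a : nat -> A,
      List.Forall (fun e => eval (v4 a) e.1 = eval (v4 a) e.2) (proj1_sig i) /\ ~ R a.
    apply: NNPP => H; apply: Hno; exists (proj1_sig i); split; first exact: (proj2_sig i).
    move=> A VA a Ha; apply: NNPP => Hr; apply: H; exists A; split => //; exists a; by split.
  have [B [h [v [VB [hemb [Hv0 [Hv1 [Hv2 [Hv3 Hxi]]]]]]]]] : exists (B : algebra) (h : A -> B) (v : nat -> B),
      V B /\ embedding h /\ v 0 = h (a 0) /\ v 1 = h (a 1) /\ v 2 = h (a 2) /\ v 3 = h (a 3) /\ ~ sat v xi.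
    apply: NNPP => H; apply: Ra; apply/(HPD VA) => B h VB hemb v H0 H1 H2 H3.
    apply: NNPP => Hx; apply: H; exists B, h, v.
    exact: (conj VB (conj hemb (conj H0 (conj H1 (conj H2 (conj H3 Hx)))))).
  have [N [w [NT EQ]]] := C1 v VB.
  exists (existT _ N w); split => //=.
  + move=> Pw; apply: Hxi; apply/(sat_qf_transfer xiqf EQ); exact: Pw w erefl erefl erefl erefl.
  + move=> e He.
    have Ea := (List.Forall_forall _ _).1 Ha e He.
    have hv x : h (eval (v4 a) x) = eval v (ren x).
      rewrite (hom_eval _ _ (proj1 hemb)) eval_ren; apply: eval_ext => -[|[|[|n]]] /=;
        by rewrite ?Hv0 ?Hv1 ?Hv2 ?Hv3.
    rewrite -!eval_ren; apply/EQ; by rewrite -!hv Ea.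
pose P i := proj1_sig (constructive_indefinite_description _ (Hi i)).
have PP i := proj2_sig (constructive_indefinite_description _ (Hi i)).
pose Nf i := projT1 (P i).
pose wf i : nat -> Nf i := projT2 (P i).
have GT : models (UP U Nf) T by apply: UP_models => i; case: (PP i).
have VG := T_V GT.
have [Phi HPhi] := Phi_ex.
have nPsi : ~ Psi (N := UP U Nf) (fun n => cls U (fun i => wf i n)).
  move/HPhi/los => H; apply: (uf_false H) => i; rewrite HPhi; by case: (PP i).
apply: nPsi.
apply: (K_fwd VG GT (fun s t => iff_refl _)).
apply: star => // s t Hst.
have Hin := HU (s, t) Hst.
have v4g : v4 (A := UP U Nf) (fun n => cls U (fun i => wf i n)) = (fun n => cls U (fun i => v4 (wf i) n)).
  by apply: functional_extensionality => -[|[|[|n]]].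
have : sat (A := UP U Nf) (fun n => cls U (fun i => v4 (wf i) n)) (FEq s t).
  apply/los; apply: uf_mono Hin => i Hi'; by case: (PP i) => _ _ /(_ _ Hi').
by rewrite v4g.
Qed.

End Main.


Theorem proposition5p4 (L : signature) (Hconst : exists c : sym L, ar c = 0)
  (V : algebra L -> Prop) (HV : is_variety V)
  (HCD : congruence_distributive V) (HCEP : CEP V) (HPDPC : PDPC V)
  (HMC : exists Tstar : theory L, model_completion (Th V) Tstar) :
  EDPC V.
Proof.
case: HPDPC => xi [xiqf HPD].
case: HMC => T [HT1 HT2 HT3 HT4].
have [al [Hal H]] := finite_alpha HV HCD HCEP xiqf HPD HT3 HT4.
exists al; split.
- apply/List.Forall_forall => e He.
  by case: ((List.Forall_forall _ _).1 Hal e He) => H1 [H2 _].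
- move=> A VA a1 a2 b1 b2; split.
  + move=> Hc; apply/List.Forall_forall => e He.
    case: ((List.Forall_forall _ _).1 Hal e He) => _ [_ HS].
    exact: (HS A VA (val4 a1 a2 b1 b2) Hc).
  + move=> Hf; exact: (H A VA (val4 a1 a2 b1 b2) Hf).
Qed.
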